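(* Let $d>1$ be a non-integer rational number and $\mu\ge\lceil d\rceil -1$ an integer. Then the discounted-sum aggregate function $A\mapsto \mathrm{DS}(A,d)$ on $\{0,\dots,\mu\}^\omega$ is not $\omega$-regular under any integer base $\beta\ge2$.
   Context: $\mathrm{DS}(A,d)=\sum_{i\ge0}A[i]/d^i$. For an integer $\beta\ge2$ and $x\in\mathbb{R}$, $\mathrm{rep}(x,\beta)$ is the $\omega$-word consisting of the sign of $x$ ($+$ if $x\ge0$, $-$ otherwise) followed by the interleaving of $\mathrm{Int}(x,\beta)=z_0z_1\cdots\in\{0,\dots,\beta-1\}^*0^\omega$ and $\mathrm{Frac}(x,\beta)=f_1f_2\cdots\notin\{0,\dots,\beta-1\}^*(\beta-1)^\omega$, the unique words with $|x|=\sum_{i\ge0}z_i\beta^i+\sum_{i\ge1}f_i\beta^{-i}$; its alphabet is $\mathrm{AlphaRep}(\beta)=\{+,-\}\cup\{0,\dots,\beta-1\}$. A function $f:\Sigma^\omega\to\mathbb{R}$ is $\omega$-regular under base $\beta$ if there is a B\''uchi automaton over $\Sigma\times\mathrm{AlphaRep}(\beta)$ that accepts $(A,\mathrm{rep}(x,\beta))$ (read synchronously) iff $f(A)=x$, for all $A\in\Sigma^\omega$, $x\in\mathbb{R}$. *)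

(* Defs.v *)
From Stdlib Require Import Reals Lra ZArith Classical ClassicalEpsilon.
Open Scope R_scope.

Definition DS (A : nat -> nat) (d : R) : R :=
  epsilon (inhabits 0) (fun x => infinite_sum (fun i => INR (A i) / d ^ i) x).

Definition Rceil (d : R) : Z := (- Int_part (- d))%Z.

(** The alphabet AlphaRep(beta) = {+,-} u {0,...,beta-1}; digits are Dig n
    (only n < beta ever occur in representations). *)
Inductive ARsym : Type := Plus | Minus | Dig (n : nat).

(** is_rep beta x w : w is rep(x,beta), i.e. w 0 is the sign of x and the
    remaining letters interleave Int(x,beta) = z0 z1 ... and
    Frac(x,beta) = f1 f2 ...:  w = sign z0 f1 z1 f2 z2 f3 ...
    The digit sequence f is indexed from 1 (f 0 is irrelevant). *)
Definition is_rep (beta : nat) (x : R) (w : nat -> ARsym) : Prop :=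
  w 0%nat = (if Rle_dec 0 x then Plus else Minus) /\
  exists (z f : nat -> nat),
    (forall i, (z i < beta)%nat) /\
    (forall i, (f i < beta)%nat) /\
    (exists N, forall i, (N <= i)%nat -> z i = 0%nat) /\
    ~ (exists N, forall i, (N <= i)%nat -> f i = (beta - 1)%nat) /\
    (exists xi xf,
        infinite_sum (fun i => INR (z i) * INR beta ^ i) xi /\
        infinite_sum (fun i => INR (f (S i)) / INR beta ^ (S i)) xf /\
        Rabs x = xi + xf) /\
    (forall k, w (2 * k + 1)%nat = Dig (z k) /\
               w (2 * k + 2)%nat = Dig (f (S k))).

Record Buchi (L : Type) : Type := mkBuchi {
  nstates : nat;
  init : nat -> Prop;
  delta : nat -> L -> nat -> Prop;
  final : nat -> Prop
}.
Arguments nstates {L}. Arguments init {L}. Arguments delta {L}.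
Arguments final {L}.

Definition accepts {L : Type} (B : Buchi L) (w : nat -> L) : Prop :=
  exists r : nat -> nat,
    (forall i, (r i < nstates B)%nat) /\
    init B (r 0%nat) /\
    (forall i, delta B (r i) (w i) (r (S i))) /\
    (forall N, exists i, (N <= i)%nat /\ final B (r i)).

Definition omega_regular (mu : nat) (f : (nat -> nat) -> R) (beta : nat) : Prop :=
  exists B : Buchi (nat * ARsym),
    forall (A : nat -> nat), (forall i, (A i <= mu)%nat) ->
    forall (x : R) (w : nat -> ARsym), is_rep beta x w ->
      (accepts B (fun i => (A i, w i)) <-> f A = x).

(* Main.v *)
Require Import Defs.
From Stdlib Require Import Reals Lra Lia ZArith List Classical ClassicalEpsilon.
Open Scope R_scope.

Fixpoint psum (g : nat -> R) (n : nat) : R :=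
  match n with O => 0 | S k => psum g k + g k end.

Lemma sum_psum g n : sum_f_R0 g n = psum g (S n).
Proof. induction n; simpl in *; [lra|]. rewrite IHn. reflexivity. Qed.

Lemma lim_bounds g y K a b : infinite_sum g y ->
  (forall n, (K <= n)%nat -> a <= psum g n <= b) -> a <= y <= b.
Proof.
  intros Hs Hb. split; apply Rnot_lt_le; intro Hc.
  - destruct (Hs (a - y)) as [N HN]; [lra|].
    specialize (HN (Nat.max N K) ltac:(lia)). rewrite sum_psum in HN.
    specialize (Hb (S (Nat.max N K)) ltac:(lia)). unfold Rdist in HN.
    apply Rabs_def2 in HN. lra.
  - destruct (Hs (y - b)) as [N HN]; [lra|].
    specialize (HN (Nat.max N K) ltac:(lia)). rewrite sum_psum in HN.
    specialize (Hb (S (Nat.max N K)) ltac:(lia)). unfold Rdist in HN.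
    apply Rabs_def2 in HN. lra.
Qed.

Lemma lim_shift g h y K c : infinite_sum g y ->
  (forall n, (K <= n)%nat -> psum h n = psum g n + c) -> infinite_sum h (y + c).
Proof.
  intros Hs Hb eps He. destruct (Hs eps He) as [N HN]. exists (Nat.max N K).
  intros n Hn. rewrite sum_psum, Hb by lia. rewrite <- sum_psum.
  unfold Rdist in *. replace (sum_f_R0 g n + c - (y + c)) with (sum_f_R0 g n - y) by ring.
  apply HN. lia.
Qed.

Lemma lim_psum g y : (forall eps, eps > 0 -> exists N, forall n, (N <= n)%nat -> Rabs (psum g n - y) < eps) ->
  infinite_sum g y.
Proof.
  intros H eps He. destruct (H eps He) as [N HN]. exists N. intros n Hn.
  rewrite sum_psum. apply HN. lia.
Qed.

Lemma pow_small b eps : 1 < b -> 0 < eps -> exists N, forall n, (N <= n)%nat -> / b ^ n < eps.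
Proof.
  intros Hb He. destruct (pow_lt_1_zero (/ b)) with (y := eps) as [N HN]; auto.
  { rewrite Rabs_pos_eq. rewrite <- Rinv_1; apply Rinv_0_lt_contravar; lra. left; apply Rinv_0_lt_compat; lra. }
  exists N. intros n Hn. specialize (HN n ltac:(lia)). rewrite <- pow_inv.
  rewrite Rabs_pos_eq in HN; auto. apply pow_le. left; apply Rinv_0_lt_compat; lra.
Qed.

Lemma pow_big r C K0 : 1 < r -> exists K, (K0 <= K)%nat /\ C < r ^ K.
Proof.
  intros Hr. destruct (pow_small r (/ (Rmax C 1))) as [N HN]; auto.
  { apply Rinv_0_lt_compat. generalize (Rmax_r C 1); lra. }
  exists (Nat.max N K0). split; [lia|]. specialize (HN (Nat.max N K0) ltac:(lia)).
  assert (0 < r ^ Nat.max N K0) by (apply pow_lt; lra).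
  assert (0 < Rmax C 1) by (generalize (Rmax_r C 1); lra).
  apply Rnot_le_lt. intro Hc.
  assert (r ^ Nat.max N K0 <= Rmax C 1) by (generalize (Rmax_l C 1); lra).
  apply Rinv_le_contravar in H1; auto. lra.
Qed.

Definition dg (beta : nat) (f : nat -> nat) : nat -> R :=
  fun i => INR (f (S i)) / INR beta ^ (S i).

Definition Fl (beta : nat) (x : R) (k : nat) : Z := Int_part (INR beta ^ k * x).

Lemma Fl_bounds beta x k : IZR (Fl beta x k) <= INR beta ^ k * x < IZR (Fl beta x k) + 1.
Proof. unfold Fl. destruct (base_Int_part (INR beta ^ k * x)). lra. Qed.

Lemma Fl_rel beta x k : (2 <= beta)%nat ->
  (Z.of_nat beta * Fl beta x k <= Fl beta x (S k) < Z.of_nat beta * (Fl beta x k + 1))%Z.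
Proof.
  intros Hb. pose proof (Fl_bounds beta x k) as [H1 H2]. pose proof (Fl_bounds beta x (S k)) as [H3 H4].
  assert (Hb' : 2 <= INR beta) by (apply (le_INR 2); lia).
  rewrite INR_IZR_INZ in *. simpl pow in *.
  set (B := IZR (Z.of_nat beta)) in *. set (P := B ^ k) in *.
  set (F0 := Fl beta x k) in *. set (F1 := Fl beta x (S k)) in *.
  split.
  - assert (IZR (Z.of_nat beta * F0) < IZR (F1 + 1)).
    { rewrite mult_IZR, plus_IZR. fold B. replace (B * P * x) with (B * (P * x)) in * by ring.
      apply Rle_lt_trans with (B * (P * x)); [apply Rmult_le_compat_l; lra|]. simpl; lra. }
    apply lt_IZR in H. lia.
  - apply lt_IZR. rewrite mult_IZR, plus_IZR. fold B. simpl.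
    replace (B * P * x) with (B * (P * x)) in * by ring.
    apply Rle_lt_trans with (B * (P * x)); [lra|]. apply Rmult_lt_compat_l; lra.
Qed.

Definition digf (beta : nat) (x : R) (k : nat) : nat :=
  match k with O => O | S k' => Z.to_nat (Fl beta x (S k') - Z.of_nat beta * Fl beta x k') end.

Lemma digf_S beta x k : (2 <= beta)%nat ->
  INR (digf beta x (S k)) = IZR (Fl beta x (S k)) - INR beta * IZR (Fl beta x k).
Proof.
  intros Hb. simpl. pose proof (Fl_rel beta x k Hb).
  rewrite INR_IZR_INZ, Z2Nat.id by lia. rewrite minus_IZR, mult_IZR, <- INR_IZR_INZ. ring.
Qed.

Lemma digf_lt beta x k : (2 <= beta)%nat -> (digf beta x k < beta)%nat.
Proof.
  intros Hb. destruct k; simpl; [lia|]. pose proof (Fl_rel beta x k Hb). lia.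
Qed.

Lemma Fl0 beta x : 0 <= x < 1 -> Fl beta x 0 = 0%Z.
Proof.
  intros Hx. pose proof (Fl_bounds beta x 0) as [H1 H2]. simpl in *.
  assert (IZR (Fl beta x 0) < IZR 1) by (simpl; lra).
  assert (IZR (-1) < IZR (Fl beta x 0)) by (simpl; lra).
  apply lt_IZR in H. apply lt_IZR in H0. lia.
Qed.

Lemma psum_digf beta x N : (2 <= beta)%nat -> 0 <= x < 1 ->
  psum (dg beta (digf beta x)) N = IZR (Fl beta x N) / INR beta ^ N.
Proof.
  intros Hb Hx. assert (Hb' : 2 <= INR beta) by (apply (le_INR 2); lia).
  induction N; simpl.
  - rewrite Fl0 by auto. simpl. field.
  - rewrite IHN. unfold dg. rewrite digf_S by auto. simpl. field.
    repeat split; try lra; try (apply pow_nonzero; lra).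
Qed.

Lemma digits_exist beta x : (2 <= beta)%nat -> 0 <= x < 1 ->
  exists f : nat -> nat, (forall k, (f k < beta)%nat) /\
    ~ (exists N, forall i, (N <= i)%nat -> f i = (beta - 1)%nat) /\
    infinite_sum (dg beta f) x.
Proof.
  intros Hb Hx. assert (Hb' : 2 <= INR beta) by (apply (le_INR 2); lia).
  exists (digf beta x). split; [|split].
  - intros; apply digf_lt; auto.
  - intros [N HN]. set (M := S N).
    assert (Hrec : forall t, IZR (Fl beta x (M + t)) + 1 = INR beta ^ t * (IZR (Fl beta x M) + 1)).
    { induction t.
      - rewrite Nat.add_0_r. simpl. ring.
      - rewrite Nat.add_succ_r. pose proof (digf_S beta x (M + t) Hb) as E.
        rewrite HN in E by lia. rewrite minus_INR in E by lia. simpl in E.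
        simpl pow. rewrite Rmult_assoc, <- IHt. unfold M in *. simpl Nat.add in *. simpl INR in E. lra. }
    pose proof (Fl_bounds beta x M) as [_ H2].
    assert (HP : 0 < INR beta ^ M) by (apply pow_lt; lra).
    set (delta := (IZR (Fl beta x M) + 1) / INR beta ^ M - x).
    assert (Hd : 0 < delta).
    { unfold delta. apply Rlt_Rminus. apply Rmult_lt_reg_l with (INR beta ^ M); auto.
      field_simplify; lra. }
    destruct (pow_small (INR beta) delta) as [T HT]; try lra.
    specialize (HT (M + T)%nat ltac:(lia)).
    pose proof (Fl_bounds beta x (M + T)) as [H3 _].
    rewrite pow_add in H3, HT. specialize (Hrec T).
    assert (HQ : 0 < INR beta ^ T) by (apply pow_lt; lra).
    unfold delta in HT.
    assert (x * (INR beta ^ M * INR beta ^ T) >= (IZR (Fl beta x M) + 1) * INR beta ^ T - 1) by lra.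
    assert (/ (INR beta ^ M * INR beta ^ T) * (INR beta ^ M * INR beta ^ T) = 1).
    { field. lra. }
    assert (x >= (IZR (Fl beta x M) + 1) / INR beta ^ M - / (INR beta ^ M * INR beta ^ T)).
    { apply Rle_ge. apply Rmult_le_reg_r with (INR beta ^ M * INR beta ^ T). nra.
      field_simplify; [|lra]. lra. }
    lra.
  - apply lim_psum. intros eps He.
    destruct (pow_small (INR beta) eps) as [N HN]; try lra.
    exists N. intros n Hn. rewrite psum_digf by auto. specialize (HN n Hn).
    pose proof (Fl_bounds beta x n) as [H1 H2].
    assert (HP : 0 < INR beta ^ n) by (apply pow_lt; lra).
    assert (IZR (Fl beta x n) / INR beta ^ n <= x).
    { apply Rmult_le_reg_l with (INR beta ^ n); auto. field_simplify; lra. }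
    assert (x - IZR (Fl beta x n) / INR beta ^ n < / INR beta ^ n).
    { apply Rmult_lt_reg_l with (INR beta ^ n); auto. field_simplify; lra. }
    rewrite Rabs_left1 by lra. lra.
Qed.

Definition mkword (f : nat -> nat) (n : nat) : ARsym :=
  match n with O => Plus | S m => if Nat.even m then Dig 0 else Dig (f (S (Nat.div2 m))) end.

Lemma mkword_odd f k : mkword f (2 * k + 1) = Dig 0.
Proof. replace (2 * k + 1)%nat with (S (2 * k)) by lia. unfold mkword.
  rewrite Nat.even_mul. reflexivity. Qed.

Lemma mkword_even f k : mkword f (2 * k + 2) = Dig (f (S k)).
Proof. replace (2 * k + 2)%nat with (S (S (2 * k))) by lia. unfold mkword.
  rewrite Nat.div2_succ_double, Nat.even_succ, Nat.odd_mul. reflexivity. Qed.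

Lemma psum_zero g n : (forall i, g i = 0) -> psum g n = 0.
Proof. intros H; induction n; simpl; [reflexivity|]. rewrite IHn, H. ring. Qed.

Lemma psum_S g n : psum g (S n) = psum g n + g n.
Proof. reflexivity. Qed.

Lemma psum_nonneg g n : (forall i, 0 <= g i) -> 0 <= psum g n.
Proof. intros H; induction n; simpl; [lra|]. specialize (H n); lra. Qed.

Lemma psum_mono g a b : (forall i, 0 <= g i) -> (a <= b)%nat -> psum g a <= psum g b.
Proof. intros H Hab. induction Hab; [lra|]. simpl. specialize (H m); lra. Qed.

Lemma dg_nonneg beta f i : (2 <= beta)%nat -> 0 <= dg beta f i.
Proof. intros Hb. unfold dg. apply Rmult_le_pos; [apply pos_INR|].
  left; apply Rinv_0_lt_compat, pow_lt. apply (lt_INR 0); lia. Qed.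

Lemma tail_bound beta f K t : (2 <= beta)%nat -> (forall k, (f k < beta)%nat) ->
  psum (dg beta f) (K + t) <= psum (dg beta f) K + / INR beta ^ K - / INR beta ^ (K + t).
Proof.
  intros Hb Hf. assert (Hb' : 2 <= INR beta) by (apply (le_INR 2); lia).
  induction t.
  - rewrite Nat.add_0_r. lra.
  - rewrite Nat.add_succ_r. simpl psum. unfold dg at 2.
    assert (INR (f (S (K + t))) <= INR beta - 1).
    { specialize (Hf (S (K + t))). replace (INR beta - 1) with (INR (beta - 1)) by (rewrite minus_INR by lia; reflexivity). apply le_INR. lia. }
    assert (HP : 0 < INR beta ^ (K + t)) by (apply pow_lt; lra).
    assert (INR (f (S (K + t))) / INR beta ^ S (K + t) <= / INR beta ^ (K + t) - / INR beta ^ S (K + t)).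
    { simpl pow. apply Rmult_le_reg_l with (INR beta * INR beta ^ (K + t)). nra.
      field_simplify; [lra|lra|lra]. }
    lra.
Qed.

Lemma val_bounds beta f y K : (2 <= beta)%nat -> (forall k, (f k < beta)%nat) ->
  infinite_sum (dg beta f) y ->
  psum (dg beta f) K <= y <= psum (dg beta f) K + / INR beta ^ K.
Proof.
  intros Hb Hf Hs. assert (Hb' : 2 <= INR beta) by (apply (le_INR 2); lia).
  apply (lim_bounds (dg beta f) y K); auto. intros n Hn. split.
  - apply psum_mono; auto. intros; apply dg_nonneg; auto.
  - replace n with (K + (n - K))%nat by lia. pose proof (tail_bound beta f K (n - K) Hb Hf).
    assert (0 < / INR beta ^ (K + (n - K))) by (apply Rinv_0_lt_compat, pow_lt; lra). lra.
Qed.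

Lemma val_nonneg beta f y : (2 <= beta)%nat -> (forall k, (f k < beta)%nat) ->
  infinite_sum (dg beta f) y -> 0 <= y.
Proof. intros Hb Hf Hs. pose proof (val_bounds beta f y 0 Hb Hf Hs). simpl in H. lra. Qed.

Lemma rep_ok beta f y : (2 <= beta)%nat -> (forall k, (f k < beta)%nat) ->
  ~ (exists N, forall i, (N <= i)%nat -> f i = (beta - 1)%nat) ->
  infinite_sum (dg beta f) y -> is_rep beta y (mkword f).
Proof.
  intros Hb Hf Hn Hs. pose proof (val_nonneg beta f y Hb Hf Hs). split.
  - simpl. destruct (Rle_dec 0 y); [reflexivity|lra].
  - exists (fun _ => 0%nat), f. split; [intros; lia|]. split; [auto|]. split.
    { exists 0%nat; auto. } split; [auto|]. split.
    + exists 0, y. split; [|split].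
      * apply lim_psum. intros eps He. exists 0%nat. intros n _.
        match goal with |- context [psum ?g n] => assert (H0 : psum g n = 0) end.
        { apply psum_zero. intros; simpl; ring. }
        rewrite H0. rewrite Rminus_0_r, Rabs_R0. lra.
      * exact Hs.
      * rewrite Rabs_pos_eq by lra. ring.
    + intros k. rewrite mkword_odd, mkword_even. auto.
Qed.

Lemma zero_prefix beta f y K : (2 <= beta)%nat -> (forall k, (f k < beta)%nat) ->
  infinite_sum (dg beta f) y -> y < / INR beta ^ K -> psum (dg beta f) K = 0.
Proof.
  intros Hb Hf Hs Hy. assert (Hb' : 2 <= INR beta) by (apply (le_INR 2); lia).
  pose proof (val_bounds beta f y K Hb Hf Hs) as [H1 _].
  assert (forall n, (n <= K)%nat -> psum (dg beta f) n = 0).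
  { induction n; intros Hn; simpl; [reflexivity|]. rewrite IHn by lia.
    destruct (f (S n)) eqn:E.
    - unfold dg. rewrite E. simpl. field. split; [apply pow_nonzero|]; lra.
    - exfalso. assert (psum (dg beta f) (S n) <= psum (dg beta f) K).
      { apply psum_mono; auto. intros; apply dg_nonneg; auto. }
      change (psum (dg beta f) n + dg beta f n <= psum (dg beta f) K) in H.
      rewrite IHn in H by lia.
      replace (dg beta f n) with (INR (S n0) / INR beta ^ S n) in H by (unfold dg; rewrite E; reflexivity).
      assert (/ INR beta ^ K <= / INR beta ^ S n).
      { apply Rinv_le_contravar. apply pow_lt; lra. apply Rle_pow; [lra|lia]. }
      assert (1 <= INR (S n0)) by (apply (le_INR 1); lia).
      assert (HP : 0 < / INR beta ^ S n) by (apply Rinv_0_lt_compat, pow_lt; lra).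
      assert (/ INR beta ^ S n <= INR (S n0) / INR beta ^ S n).
      { unfold Rdiv. rewrite <- (Rmult_1_l (/ _)) at 1. apply Rmult_le_compat_r; lra. }
      lra. }
  apply H; lia.
Qed.

Definition fs (f1 f2 : nat -> nat) (K : nat) (k : nat) : nat := if (k <=? K)%nat then f1 k else f2 k.

Lemma psum_fs beta f1 f2 K n : (K <= n)%nat ->
  psum (dg beta (fs f1 f2 K)) n = psum (dg beta f2) n + (psum (dg beta f1) K - psum (dg beta f2) K).
Proof.
  intros Hn. assert (forall t, (t <= K)%nat -> psum (dg beta (fs f1 f2 K)) t = psum (dg beta f1) t).
  { induction t; intros Ht; simpl; [reflexivity|]. rewrite IHt by lia. unfold dg, fs.
    replace (S t <=? K)%nat with true by (symmetry; apply Nat.leb_le; lia). reflexivity. }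
  induction Hn.
  - rewrite H. ring. lia.
  - rewrite !psum_S, IHHn.
    replace (dg beta (fs f1 f2 K) m) with (dg beta f2 m); [ring|].
    unfold dg, fs. replace (S m <=? K)%nat with false by (symmetry; apply Nat.leb_gt; lia). reflexivity.
Qed.

Lemma fs_ok beta f1 f2 y2 K : (forall k, (f1 k < beta)%nat) -> (forall k, (f2 k < beta)%nat) ->
  ~ (exists N, forall i, (N <= i)%nat -> f2 i = (beta - 1)%nat) ->
  infinite_sum (dg beta f2) y2 ->
  (forall k, (fs f1 f2 K k < beta)%nat) /\
  ~ (exists N, forall i, (N <= i)%nat -> fs f1 f2 K i = (beta - 1)%nat) /\
  infinite_sum (dg beta (fs f1 f2 K)) (y2 + (psum (dg beta f1) K - psum (dg beta f2) K)).
Proof.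
  intros H1 H2 Hn Hs. split; [|split].
  - intros k; unfold fs; destruct (k <=? K)%nat; auto.
  - intros [N HN]. apply Hn. exists (Nat.max N (S K)). intros i Hi.
    specialize (HN i ltac:(lia)). unfold fs in HN.
    replace (i <=? K)%nat with false in HN by (symmetry; apply Nat.leb_gt; lia). auto.
  - apply (lim_shift (dg beta f2) _ _ K); auto. intros; apply psum_fs; auto.
Qed.

Lemma mkword_fs f1 f2 K k :
  mkword (fs f1 f2 K) k = if (k <? 2 * K + 1)%nat then mkword f1 k else mkword f2 k.
Proof.
  destruct k as [|m]; [unfold mkword; destruct (0 <? 2 * K + 1)%nat; reflexivity|].
  destruct (Nat.even m) eqn:E.
  - unfold mkword. rewrite E. destruct (S m <? 2 * K + 1)%nat; reflexivity.
  - unfold mkword. rewrite E. unfold fs.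
    assert (Hm : m = (2 * Nat.div2 m + 1)%nat).
    { pose proof (Nat.div2_odd m). rewrite <- Nat.negb_even, E in H. simpl in H. lia. }
    destruct (S m <? 2 * K + 1)%nat eqn:E2.
    + apply Nat.ltb_lt in E2. replace (S (Nat.div2 m) <=? K)%nat with true; auto.
      symmetry; apply Nat.leb_le; lia.
    + apply Nat.ltb_ge in E2. replace (S (Nat.div2 m) <=? K)%nat with false; auto.
      symmetry; apply Nat.leb_gt; lia.
Qed.

Lemma pigeon m : forall (s : nat -> nat), (forall i, (i <= m)%nat -> (s i < m)%nat) ->
  exists i j, (i < j <= m)%nat /\ s i = s j.
Proof.
  induction m as [|m IH]; intros s Hs.
  - specialize (Hs 0%nat ltac:(lia)). lia.
  - destruct (classic (exists i, (i <= m)%nat /\ s i = s (S m))) as [[i [Hi E]]|Hno].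
    + exists i, (S m). split; [lia|auto].
    + set (c := s (S m)).
      destruct (IH (fun i => if (s i <? c)%nat then s i else (s i - 1)%nat)) as [i [j [Hij E]]].
      * intros i Hi. assert (s i <> c) by (intro; apply Hno; exists i; auto).
        pose proof (Hs i ltac:(lia)). pose proof (Hs (S m) ltac:(lia)). unfold c in *.
        destruct (s i <? s (S m))%nat eqn:E; [apply Nat.ltb_lt in E|apply Nat.ltb_ge in E]; lia.
      * exists i, j. split; [lia|].
        assert (s i <> c) by (intro; apply Hno; exists i; split; [lia|auto]).
        assert (s j <> c) by (intro; apply Hno; exists j; split; [lia|auto]).
        destruct (s i <? c)%nat eqn:E1; [apply Nat.ltb_lt in E1|apply Nat.ltb_ge in E1];
        destruct (s j <? c)%nat eqn:E2; [apply Nat.ltb_lt in E2|apply Nat.ltb_ge in E2|apply Nat.ltb_lt in E2|apply Nat.ltb_ge in E2]; lia.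
Qed.

Definition ej (j : nat) (i : nat) : nat := if Nat.eqb i j then 1%nat else 0%nat.

Lemma DS_ej d j : 1 < d -> DS (ej j) d = / d ^ j.
Proof.
  intros Hd.
  assert (Hs : infinite_sum (fun i => INR (ej j i) / d ^ i) (/ d ^ j)).
  { apply lim_psum. intros eps He. exists (S j). intros n Hn.
    assert (forall n0, psum (fun i => INR (ej j i) / d ^ i) n0 = if (j <? n0)%nat then / d ^ j else 0).
    { intros n0; induction n0; [reflexivity|]. rewrite psum_S, IHn0. unfold ej.
      destruct (Nat.eqb n0 j) eqn:E.
      - apply Nat.eqb_eq in E. rewrite E. replace (j <? j)%nat with false by (symmetry; apply Nat.ltb_ge; lia).
        replace (j <? S j)%nat with true by (symmetry; apply Nat.ltb_lt; lia). simpl. field; repeat split; apply pow_nonzero; lra.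
      - apply Nat.eqb_neq in E. destruct (j <? n0)%nat eqn:E1; [apply Nat.ltb_lt in E1|apply Nat.ltb_ge in E1].
        + replace (j <? S n0)%nat with true by (symmetry; apply Nat.ltb_lt; lia). simpl. field; repeat split; apply pow_nonzero; lra.
        + replace (j <? S n0)%nat with false by (symmetry; apply Nat.ltb_ge; lia). simpl. field; repeat split; apply pow_nonzero; lra. }
    rewrite H. replace (j <? n)%nat with true by (symmetry; apply Nat.ltb_lt; lia).
    rewrite Rminus_diag, Rabs_R0. lra. }
  unfold DS. apply (uniqueness_sum (fun i => INR (ej j i) / d ^ i)); auto.
  apply epsilon_spec. exists (/ d ^ j). exact Hs.
Qed.

Lemma rat_sq (d : R) (beta : nat) : (exists (p q : Z), (q <> 0)%Z /\ d = IZR p / IZR q) ->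
  d * d = INR beta -> exists n : Z, d = IZR n.
Proof.
  intros [p [q [Hq Hd]]] Hsq. subst d.
  assert (Hq' : IZR q <> 0) by (apply not_0_IZR; auto).
  assert (E : (p * p = Z.of_nat beta * q * q)%Z).
  { apply eq_IZR. rewrite !mult_IZR, <- INR_IZR_INZ, <- Hsq. clear -Hq'. field. auto. }
  set (g := Z.gcd p q).
  assert (Hg : g <> 0%Z) by (unfold g; intro H; apply Z.gcd_eq_0 in H; lia).
  destruct (Z.gcd_divide_l p q) as [p' Hp]. destruct (Z.gcd_divide_r p q) as [q' Hq2]. fold g in Hp, Hq2.
  assert (Hc : Z.gcd p' q' = 1%Z).
  { assert (p' = p / g)%Z by (rewrite Hp, Z.div_mul; auto).
    assert (q' = q / g)%Z by (rewrite Hq2, Z.div_mul; auto).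
    rewrite H, H0. apply Z.gcd_div_gcd; auto. }
  assert (E' : (p' * p' = Z.of_nat beta * q' * q')%Z).
  { rewrite Hp, Hq2 in E. apply (Z.mul_reg_r _ _ (g * g)); [nia|]. lia. }
  assert (Hdiv : (q' | p')%Z).
  { apply (Z.gauss _ p'). exists (Z.of_nat beta * q')%Z. lia. rewrite Z.gcd_comm. auto. }
  assert (Hone : (q' | 1)%Z).
  { rewrite <- Hc. apply Z.gcd_greatest; auto. apply Z.divide_refl. }
  apply Z.divide_1_r in Hone.
  assert (Hg' : IZR g <> 0) by (apply not_0_IZR; auto).
  destruct Hone as [H1|H1].
  - exists p'. rewrite Hp, Hq2, H1, !mult_IZR. field. auto.
  - exists (- p')%Z. rewrite Hp, Hq2, H1, !mult_IZR, !opp_IZR. field. auto.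
Qed.

Lemma accepts_ext {L : Type} (B : Buchi L) w1 w2 : (forall k, w1 k = w2 k) -> accepts B w1 -> accepts B w2.
Proof.
  intros E [r [H1 [H2 [H3 H4]]]]. exists r. repeat split; auto. intros i; rewrite <- E; auto.
Qed.

Lemma core (B : Buchi (nat * ARsym)) (K : nat) (A : nat -> nat -> nat) (F : nat -> nat -> nat) :
  (forall i, (i <= nstates B)%nat -> accepts B (fun k => (A i k, mkword (F i) k))) ->
  exists i j, (i < j <= nstates B)%nat /\
    accepts B (fun k => (if (k <? 2 * K + 1)%nat then A i k else A j k, mkword (fs (F i) (F j) K) k)).
Proof.
  intros Hacc. set (n := (2 * K + 1)%nat). set (m := nstates B).
  set (P := fun i (r : nat -> nat) => (forall t, (r t < nstates B)%nat) /\ init B (r 0%nat) /\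
    (forall t, delta B (r t) (A i t, mkword (F i) t) (r (S t))) /\
    (forall N, exists t, (N <= t)%nat /\ final B (r t))).
  set (R := fun i => epsilon (inhabits (fun _ : nat => 0%nat)) (P i)).
  assert (HR : forall i, (i <= m)%nat -> P i (R i)).
  { intros i Hi. unfold R. apply epsilon_spec. apply (Hacc i Hi). }
  destruct (pigeon m (fun i => R i n)) as [i [j [Hij E]]].
  { intros i Hi. apply (HR i Hi). }
  exists i, j. split; [lia|].
  destruct (HR i ltac:(lia)) as [Ri1 [Ri2 [Ri3 Ri4]]].
  destruct (HR j ltac:(lia)) as [Rj1 [Rj2 [Rj3 Rj4]]].
  exists (fun t => if (t <? n)%nat then R i t else R j t). split; [|split; [|split]].
  - intros t. destruct (t <? n)%nat; auto.
  - replace (0 <? n)%nat with true by (symmetry; apply Nat.ltb_lt; unfold n; lia). auto.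
  - intros t. rewrite mkword_fs. fold n.
    destruct (t <? n)%nat eqn:E1; [apply Nat.ltb_lt in E1|apply Nat.ltb_ge in E1].
    + destruct (S t <? n)%nat eqn:E2; [apply Nat.ltb_lt in E2|apply Nat.ltb_ge in E2].
      * apply Ri3.
      * assert (S t = n) by lia. rewrite H, <- E, <- H. apply Ri3.
    + replace (S t <? n)%nat with false by (symmetry; apply Nat.ltb_ge; lia). apply Rj3.
  - intros N. destruct (Rj4 (Nat.max N n)) as [t [Ht Hf]]. exists t. split; [lia|].
    replace (t <? n)%nat with false by (symmetry; apply Nat.ltb_ge; lia). auto.
Qed.

Definition digOK beta (f : nat -> nat) := (forall k, (f k < beta)%nat) /\
    ~ (exists N, forall i, (N <= i)%nat -> f i = (beta - 1)%nat).

Lemma main_gen (d : R) (mu beta : nat) (B : Buchi (nat * ARsym)) (K : nat) (a : nat -> nat) :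
  1 < d -> (1 <= mu)%nat -> (2 <= beta)%nat ->
  (forall (A : nat -> nat), (forall i, (A i <= mu)%nat) ->
    forall (x : R) (w : nat -> ARsym), is_rep beta x w ->
      (accepts B (fun i => (A i, w i)) <-> DS A d = x)) ->
  (forall i, (1 <= a i)%nat) ->
  exists i j fi fj, (i < j <= nstates B)%nat /\ digOK beta fi /\ digOK beta fj /\
    infinite_sum (dg beta fi) (/ d ^ a i) /\ infinite_sum (dg beta fj) (/ d ^ a j) /\
    ((forall k, (if (k <? 2 * K + 1)%nat then ej (a i) k else ej (a j) k) = ej (a j) k) ->
       / d ^ a j = / d ^ a j + (psum (dg beta fi) K - psum (dg beta fj) K)) /\
    ((forall k, (if (k <? 2 * K + 1)%nat then ej (a i) k else ej (a j) k) = ej (a i) k) ->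
       / d ^ a i = / d ^ a j + (psum (dg beta fi) K - psum (dg beta fj) K)).
Proof.
  intros Hd Hmu Hb HB Ha.
  set (X := fun i => / d ^ a i).
  assert (HX : forall i, 0 <= X i < 1).
  { intros i. unfold X. assert (d <= d ^ a i).
    { rewrite <- (pow_1 d) at 1. apply Rle_pow; [lra|apply Ha]. }
    split. left; apply Rinv_0_lt_compat; lra. rewrite <- Rinv_1. apply Rinv_0_lt_contravar; lra. }
  set (Q := fun i f => digOK beta f /\ infinite_sum (dg beta f) (X i)).
  set (F := fun i => epsilon (inhabits (fun _ : nat => 0%nat)) (Q i)).
  assert (HF : forall i, Q i (F i)).
  { intros i. unfold F. apply epsilon_spec. destruct (digits_exist beta (X i) Hb (HX i)) as [f [H1 [H2 H3]]].
    exists f. split; [split|]; auto. }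
  assert (Hej : forall j i, (ej j i <= mu)%nat).
  { intros j i. unfold ej. destruct (Nat.eqb i j); lia. }
  assert (Hacc : forall i, (i <= nstates B)%nat -> accepts B (fun k => (ej (a i) k, mkword (F i) k))).
  { intros i _. destruct (HF i) as [[H1 H2] H3].
    apply (HB (ej (a i)) (Hej _) (X i)). apply rep_ok; auto. rewrite DS_ej; auto. }
  destruct (core B K (fun i => ej (a i)) F Hacc) as [i [j [Hij Hs]]].
  exists i, j, (F i), (F j). destruct (HF i) as [[Hi1 Hi2] Hi3]. destruct (HF j) as [[Hj1 Hj2] Hj3].
  destruct (fs_ok beta (F i) (F j) (X j) K Hi1 Hj1 Hj2 Hj3) as [G1 [G2 G3]].
  pose proof (rep_ok beta _ _ Hb G1 G2 G3) as Hrep.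
  split; [lia|]. split; [split; auto|]. split; [split; auto|]. split; [auto|]. split; [auto|]. split.
  - intros E. apply (accepts_ext _ _ (fun k => (ej (a j) k, mkword (fs (F i) (F j) K) k))) in Hs.
    2:{ intros k. rewrite E. reflexivity. }
    apply (HB (ej (a j)) (Hej _) _ _ Hrep) in Hs. rewrite DS_ej in Hs; auto.
  - intros E. apply (accepts_ext _ _ (fun k => (ej (a i) k, mkword (fs (F i) (F j) K) k))) in Hs.
    2:{ intros k. rewrite E. reflexivity. }
    apply (HB (ej (a i)) (Hej _) _ _ Hrep) in Hs. rewrite DS_ej in Hs; auto.
Qed.

Theorem theorem8 (d : R) (mu : nat)
  (hd1 : 1 < d)
  (hrat : exists (p q : Z), (q <> 0)%Z /\ d = IZR p / IZR q)
  (hnonint : ~ exists n : Z, d = IZR n)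
  (hmu : (Rceil d - 1 <= Z.of_nat mu)%Z) :
  forall beta : nat, (2 <= beta)%nat ->
    ~ omega_regular mu (fun A => DS A d) beta.
Proof.
  intros beta Hb [B HB].
  assert (Hmu : (1 <= mu)%nat).
  { unfold Rceil in hmu. pose proof (base_Int_part (- d)) as [H1 _].
    assert (IZR (Int_part (- d)) < IZR (-1)) by (simpl; lra). apply lt_IZR in H. lia. }
  assert (Hb' : 2 <= INR beta) by (apply (le_INR 2); lia).
  set (b := INR beta) in *.
  assert (Hd0 : 0 < d) by lra.
  destruct (Rtotal_order (d * d) b) as [Hlt|[Heq|Hgt]].
  -
    assert (Hr : 1 < b * / (d * d)).
    { apply Rmult_lt_reg_r with (d * d); [nra|]. rewrite Rmult_assoc, Rinv_l by nra. lra. }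
    destruct (pow_big (b * / (d * d)) (d ^ (nstates B + 2) / (d - 1)) 0 Hr) as [K [_ HK]].
    destruct (main_gen d mu beta B K (fun i => (2 * K + 1 + i)%nat) hd1 Hmu Hb HB) as
      [i [j [fi [fj [Hij [[Hfi1 _] [[Hfj1 _] [Hsi [Hsj [E1 _]]]]]]]]]]; [intros; lia|].
    cbv beta in *.
    assert (HP : psum (dg beta fi) K = psum (dg beta fj) K).
    { assert (/ d ^ (2 * K + 1 + j) = / d ^ (2 * K + 1 + j) + (psum (dg beta fi) K - psum (dg beta fj) K)).
      { apply E1. intros k. unfold ej. destruct (k <? 2 * K + 1)%nat eqn:Ek; [|reflexivity].
        apply Nat.ltb_lt in Ek. replace (Nat.eqb k (2 * K + 1 + i)) with false by (symmetry; apply Nat.eqb_neq; lia).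
        replace (Nat.eqb k (2 * K + 1 + j)) with false by (symmetry; apply Nat.eqb_neq; lia). reflexivity. }
      lra. }
    pose proof (val_bounds beta fi _ K Hb Hfi1 Hsi) as Bi.
    pose proof (val_bounds beta fj _ K Hb Hfj1 Hsj) as Bj. fold b in Bi, Bj.
    set (ai := (2 * K + 1 + i)%nat) in *. set (aj := (2 * K + 1 + j)%nat) in *.
    set (M := (2 * K + 2 + nstates B)%nat).
    assert (Hdpos : forall n, 0 < d ^ n) by (intros; apply pow_lt; lra).
    assert (S1 : / d ^ aj <= / d ^ (S ai)).
    { apply Rinv_le_contravar; auto. apply Rle_pow; [lra|unfold ai, aj; lia]. }
    assert (S2 : / d ^ M <= / d ^ (S ai)).
    { apply Rinv_le_contravar; auto. apply Rle_pow; [lra|unfold ai, M; lia]. }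
    assert (S3 : / d ^ ai - / d ^ (S ai) = (d - 1) * / d ^ (S ai)).
    { simpl pow. field. split; [apply pow_nonzero|]; lra. }
    assert (HbK : d ^ M < (d - 1) * b ^ K).
    { rewrite Rpow_mult_distr, pow_inv in HK.
      assert (Hdd : (d * d) ^ K = d ^ (2 * K)) by (rewrite pow_mult; simpl; f_equal; ring).
      rewrite Hdd in HK.
      assert (d ^ M = d ^ (nstates B + 2) * d ^ (2 * K)) by (rewrite <- pow_add; f_equal; unfold M; lia).
      rewrite H. pose proof (Hdpos (2 * K)%nat). pose proof (Hdpos (nstates B + 2)%nat).
      apply Rmult_lt_compat_r with (r := d ^ (2 * K) * (d - 1)) in HK; [|nra].
      replace (b ^ K * / d ^ (2 * K) * (d ^ (2 * K) * (d - 1))) with ((d - 1) * b ^ K) in HK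
        by (field; lra).
      replace (d ^ (nstates B + 2) / (d - 1) * (d ^ (2 * K) * (d - 1))) with (d ^ (nstates B + 2) * d ^ (2 * K)) in HK
        by (field; lra). lra. }
    assert (HbK' : / b ^ K < (d - 1) * / d ^ M).
    { assert (0 < b ^ K) by (apply pow_lt; lra). pose proof (Hdpos M).
      apply Rmult_lt_reg_l with (b ^ K * d ^ M); [nra|].
      replace (b ^ K * d ^ M * / b ^ K) with (d ^ M) by (field; lra).
      replace (b ^ K * d ^ M * ((d - 1) * / d ^ M)) with ((d - 1) * b ^ K) by (field; lra). lra. }
    assert ((d - 1) * / d ^ M <= (d - 1) * / d ^ (S ai)) by (apply Rmult_le_compat_l; lra).
    lra.
  - apply hnonint. apply (rat_sq d beta); auto.
  -
    assert (Hr : 1 < d * d * / b).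
    { apply Rmult_lt_reg_r with b; [lra|]. rewrite Rmult_assoc, Rinv_l by lra. lra. }
    destruct (pow_big (d * d * / b) (d ^ nstates B) (S (nstates B)) Hr) as [K [HK0 HK]].
    destruct (main_gen d mu beta B K (fun i => (2 * K - Nat.min i (nstates B))%nat) hd1 Hmu Hb HB) as
      [i [j [fi [fj [Hij [[Hfi1 _] [[Hfj1 _] [Hsi [Hsj [_ E2]]]]]]]]]]; [intros; lia|].
    cbv beta in *. rewrite (Nat.min_l i), (Nat.min_l j) in * by lia.
    assert (Ev : / d ^ (2 * K - i) = / d ^ (2 * K - j) + (psum (dg beta fi) K - psum (dg beta fj) K)).
    { apply E2. intros k. unfold ej. destruct (k <? 2 * K + 1)%nat eqn:Ek; [reflexivity|].
      apply Nat.ltb_ge in Ek. replace (Nat.eqb k (2 * K - i)) with false by (symmetry; apply Nat.eqb_neq; lia).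
      replace (Nat.eqb k (2 * K - j)) with false by (symmetry; apply Nat.eqb_neq; lia). reflexivity. }
    assert (Hdpos : forall n, 0 < d ^ n) by (intros; apply pow_lt; lra).
    assert (Hsmall : / d ^ (2 * K - nstates B) < / b ^ K).
    { rewrite Rpow_mult_distr, pow_inv in HK.
      assert (Hdd : (d * d) ^ K = d ^ (2 * K)) by (rewrite pow_mult; simpl; f_equal; ring).
      rewrite Hdd in HK.
      assert (d ^ (2 * K) = d ^ nstates B * d ^ (2 * K - nstates B)) by (rewrite <- pow_add; f_equal; lia).
      rewrite H in HK. assert (0 < b ^ K) by (apply pow_lt; lra).
      pose proof (Hdpos (nstates B)). pose proof (Hdpos (2 * K - nstates B)%nat).
      apply Rinv_0_lt_contravar; auto.
      apply Rmult_lt_compat_r with (r := b ^ K * / d ^ nstates B) in HK;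
        [|apply Rmult_lt_0_compat; auto; apply Rinv_0_lt_compat; auto].
      replace (d ^ nstates B * (b ^ K * / d ^ nstates B)) with (b ^ K) in HK by (field; lra).
      replace (d ^ nstates B * d ^ (2 * K - nstates B) * / b ^ K * (b ^ K * / d ^ nstates B))
        with (d ^ (2 * K - nstates B)) in HK by (field; lra). lra. }
    assert (Hle : forall t, (t <= nstates B)%nat -> / d ^ (2 * K - t) < / b ^ K).
    { intros t Ht. eapply Rle_lt_trans; [|exact Hsmall].
      apply Rinv_le_contravar; auto. apply Rle_pow; [lra|lia]. }
    pose proof (zero_prefix beta fi _ K Hb Hfi1 Hsi (Hle i ltac:(lia))).
    pose proof (zero_prefix beta fj _ K Hb Hfj1 Hsj (Hle j ltac:(lia))).
    rewrite H, H0 in Ev.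
    assert (d ^ (2 * K - j) < d ^ (2 * K - i)) by (apply Rlt_pow; [lra|lia]).
    pose proof (Hdpos (2 * K - j)%nat).
    assert (/ d ^ (2 * K - i) < / d ^ (2 * K - j)) by (apply Rinv_0_lt_contravar; auto).
    lra.
Qed.
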